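(* Let $\alpha\ge0$ and $p\ge\dfrac{9+3\alpha+\sqrt{9\alpha^2+30\alpha+33}}{4}$. Then $p>\alpha+2$ and $F_{p,\alpha}(r)\le0$ for all $r\in(0,1]$, where $$F_{p,\alpha}(r)=r^{\,p-4-\frac{3\alpha}{2}}\int_0^{\frac{2r}{1+r}}\frac{t^{\frac{\alpha+2}{p}-1}}{(1-t)^{\frac{\alpha+2}{p}}}\,dt-\int_0^1\frac{t^{\frac{\alpha+2}{p}-1}}{(1-t)^{\frac{\alpha+2}{p}}}\,dt .$$ *)

(* Defs.v *)
From HB Require Import structures.
From mathcomp Require Import all_boot all_order all_algebra.
From mathcomp Require Import all_classical all_reals all_analysis.
Set Implicit Arguments. Unset Strict Implicit. Unset Printing Implicit Defensive.
Import Order.TTheory GRing.Theory Num.Theory.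
Import numFieldNormedType.Exports.
Local Open Scope classical_set_scope.
Local Open Scope ring_scope.

Definition kern {R : realType} (p alpha : R) (t : R) : R :=
  t `^ ((alpha + 2) / p - 1) / (1 - t) `^ ((alpha + 2) / p).

Definition Ikern {R : realType} (p alpha x : R) : \bar R :=
  (\int[@lebesgue_measure R]_(t in `]0%R, x[%classic) (kern p alpha t)%:E)%E.

Definition Fpa {R : realType} (p alpha r : R) : \bar R :=
  ((r `^ (p - 4 - 3 * alpha / 2))%:E * Ikern p alpha (2 * r / (1 + r))
     - Ikern p alpha 1)%E.

(* Main.v *)
Require Import Defs.
From HB Require Import structures.
From mathcomp Require Import all_boot all_order all_algebra.
From mathcomp Require Import all_classical all_reals all_analysis.
From mathcomp Require Import measurable_realfun.
From mathcomp Require Import ring lra.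
Set Implicit Arguments. Unset Strict Implicit. Unset Printing Implicit Defensive.
Import Order.TTheory GRing.Theory Num.Theory.
Import numFieldNormedType.Exports.
Local Open Scope classical_set_scope.
Local Open Scope ring_scope.

Section helpers.
Context {R : realType}.
Let mu := @lebesgue_measure R.

Lemma ftc_cc (f F : R -> R) (x y : R) : x < y ->
  (forall t : R, x <= t <= y -> is_derive t 1 F (f t)) ->
  (forall t : R, x <= t <= y -> {for t, continuous f}) ->
  (\int[mu]_(t in `[x, y]) (f t)%:E = (F y - F x)%:E)%E.
Proof.
move=> xy dF cf.
have cF t : x <= t <= y -> {for t, continuous F}.
  move=> /dF [] d _; exact/differentiable_continuous/derivable1_diffP.
rewrite EFinB; apply: continuous_FTC2 => //.
- apply: continuous_in_subspaceT => t; rewrite inE /= in_itv /= => ht.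
  exact: cf.
- split.
  + move=> t; rewrite in_itv /= => /andP[h1 h2].
    by case: (dF t); first by rewrite !ltW.
  + apply: cvg_at_right_filter; apply: cF; by rewrite lexx ltW.
  + apply: cvg_at_left_filter; apply: cF; by rewrite lexx ltW.
- move=> t; rewrite in_itv /= => /andP[h1 h2].
  by case: (dF t) => [|_ <-]; [rewrite !ltW|rewrite derive1E].
Qed.

Lemma cont_pow (e t : R) : 0 < t -> {for t, continuous (fun s : R => s `^ e)}.
Proof.
move=> t0; apply/differentiable_continuous/derivable1_diffP.
by apply: derivable_powR; rewrite in_itv /= t0.
Qed.

Lemma mpow (D : set R) (e : R) : measurable_fun D (fun s : R => s `^ e).
Proof. exact: measurable_funTS (measurable_powR _). Qed.

Lemma pow_upper (a u : R) : 0 < a -> 0 < u ->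
  (\int[mu]_(t in `]0%R, u[) (a * t `^ (a - 1))%:E <= (u `^ a)%:E)%E.
Proof.
move=> a0 u0.
pose P (k : nat) := `]u / k.+2%:R, u / k.+1%:R]%classic.
pose f t := (a * t `^ (a - 1))%:E.
have mf (D : set R) : measurable_fun D f.
  apply/measurable_EFinP; apply: measurable_funM => //; exact: mpow.
have f0 (D : set R) t : D t -> (0 <= f t)%E.
  by move=> _; rewrite lee_fin mulr_ge0 ?powR_ge0 // ltW.
have PE k t : P k t -> Num.truncn (u / t) = k.+1.
  rewrite /P /= in_itv /= => /andP[h1 h2].
  have t0 : 0 < t by apply: lt_trans h1; apply: divr_gt0.
  apply: truncn_def; apply/andP; split.
    by rewrite ler_pdivlMr // mulrC -ler_pdivlMr.
  by rewrite ltr_pdivrMr // mulrC -ltr_pdivrMr.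
have sub : `]0, u[%classic `<=` \bigcup_k P k.
  move=> t /=; rewrite in_itv /= => /andP[t0 tu].
  have ut1 : 1 <= u / t by rewrite ler_pdivlMr // mul1r ltW.
  have := truncn_itv (le_trans ler01 ut1) => /andP[h1 h2].
  have n0 : (0 < Num.truncn (u / t))%N by rewrite truncn_gt0.
  exists (Num.truncn (u / t)).-1 => //.
  rewrite /P /= in_itv /= !prednK //; apply/andP; split.
    by rewrite ltr_pdivrMr // mulrC -ltr_pdivrMr.
  rewrite ler_pdivlMr ?ltr0n // mulrC -ler_pdivlMr //.
have tP : trivIset setT P.
  move=> i j _ _ [t [Pi Pj]].
  by have := PE i t Pi; rewrite (PE j t Pj) => -[].
apply: (@le_trans _ _ (\int[mu]_(t in \bigcup_k P k) f t)%E).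
  apply: ge0_subset_integral => //.
  - by apply: bigcup_measurable => k _; exact: measurable_itv.
  - exact: mf.
  - exact: f0.
have mP : forall k, measurable (P k) by move=> k; exact: measurable_itv.
have mfU := mf (\bigcup_k P k).
rewrite ge0_integral_bigcup //; last exact: f0.
pose x (k : nat) := (u / k.+1%:R) `^ a.
rewrite (@eq_eseriesr _ _ (fun k => (x k - x k.+1)%:E)); last first.
  move=> k _; rewrite /P integral_itv_obnd_cbnd; last exact: mf.
  have lt12 : u / k.+2%:R < u / k.+1%:R.
    by rewrite ltr_pM2l // ltf_pV2 ?ltr_nat ?posrE ?ltr0n.
  have pos : 0 < u / k.+2%:R by apply: divr_gt0.
  have dF : forall t, u / k.+2%:R <= t <= u / k.+1%:R ->
      is_derive t 1 (fun s : R => s `^ a) (a * t `^ (a - 1)).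
    move=> t /andP[h1 _]; apply: is_derive1_powR; exact: lt_le_trans h1.
  have cf : forall t, u / k.+2%:R <= t <= u / k.+1%:R ->
      {for t, continuous (fun s : R => a * s `^ (a - 1))}.
    move=> t /andP[h1 _]; apply: continuousM; first exact: cvg_cst.
    apply: cont_pow; exact: lt_le_trans h1.
  by rewrite (ftc_cc lt12 dF cf).
apply: lime_le.
  apply: is_cvg_nneseries => n _ _; rewrite lee_fin subr_ge0.
  apply: ge0_ler_powR; rewrite ?nnegrE; [exact: ltW| | |].
  - by apply: divr_ge0; [exact: ltW|].
  - by apply: divr_ge0; [exact: ltW|].
  - by rewrite ler_pM2l // lef_pV2 ?ler_nat ?posrE ?ltr0n.
apply: nearW => n.
rewrite sumEFin lee_fin.
have -> : \sum_(0 <= i < n) (x i - x i.+1) = x 0%N - x n.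
  rewrite -opprB -telescope_sumr // -sumrN; apply: eq_bigr => i _; by rewrite opprB.
rewrite /x divr1 lerBlDr lerDl; exact: powR_ge0.
Qed.


Lemma onem_ftc (a x y : R) : 0 < a < 1 -> x < y -> y < 1 ->
  (\int[mu]_(t in `[x, y]) ((1 - a) * (1 - t) `^ (- a))%:E =
   ((1 - x) `^ (1 - a) - (1 - y) `^ (1 - a))%:E)%E.
Proof.
move=> /andP[a0 a1] xy y1.
have dF : forall t, x <= t <= y ->
    is_derive t 1 (fun s : R => - (1 - s) `^ (1 - a)) ((1 - a) * (1 - t) `^ (- a)).
  move=> t /andP[_ ty].
  have t1 : 0 < 1 - t by lra.
  have h1 : is_derive t 1 (fun s : R => 1 - s) (-1).
    have := @is_deriveB R R R (cst 1) (@id R) t 1 0 1 _ _.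
    by rewrite sub0r => h; exact: h.
  have h2 : is_derive (1 - t) 1 (fun s : R => s `^ (1 - a)) ((1 - a) * (1 - t) `^ (1 - a - 1)).
    exact: is_derive1_powR.
  have h3 := is_derive1_comp (f := fun s : R => s `^ (1 - a)) (g := fun s : R => 1 - s) (x := t) h2 h1.
  have h4 := @is_deriveN _ _ _ _ _ _ _ h3.
  apply: is_derive_eq.
  by rewrite (_ : 1 - a - 1 = - a) //; [rewrite mulrN1 opprK|ring].
have cf : forall t, x <= t <= y ->
    {for t, continuous (fun s : R => (1 - a) * (1 - s) `^ (- a))}.
  move=> t /andP[_ ty]; apply: continuousM; first exact: cvg_cst.
  apply: (@continuous_comp _ _ _ (fun s : R => 1 - s) (fun s : R => s `^ (- a))).
    by apply: continuousB; [exact: cvg_cst|exact: cvg_id].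
  apply: cont_pow; lra.
rewrite (ftc_cc xy dF cf); congr (_%:E); ring.
Qed.

Lemma monem (a : R) (D : set R) :
  measurable_fun D (fun t : R => (1 - a) * (1 - t) `^ (- a)).
Proof.
apply: measurable_funM => //; apply: (measurableT_comp (measurable_powR _)) => //.
exact: measurable_funB.
Qed.

Lemma onem_lower (a u : R) : 0 < a < 1 -> u < 1 ->
  (((1 - u) `^ (1 - a))%:E <=
   \int[mu]_(t in `[u, 1%R[) ((1 - a) * (1 - t) `^ (- a))%:E)%E.
Proof.
move=> a01 u1; have /andP[a0 a1] := a01.
have J0 : (0 <= \int[mu]_(t in `[u, 1%R[) ((1 - a) * (1 - t) `^ (- a))%:E)%E.
  apply: integral_ge0 => t _; rewrite lee_fin mulr_ge0 ?powR_ge0 //; lra.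
have key : forall y, u < y -> y < 1 ->
  (((1 - u) `^ (1 - a) - (1 - y) `^ (1 - a))%:E <=
   \int[mu]_(t in `[u, 1%R[) ((1 - a) * (1 - t) `^ (- a))%:E)%E.
  move=> y uy y1; rewrite -onem_ftc //.
  apply: ge0_subset_integral => //.
  - by apply/measurable_EFinP; exact: monem.
  - move=> t _; rewrite lee_fin mulr_ge0 ?powR_ge0 //; lra.
  - move=> t /=; rewrite !in_itv /= => /andP[-> ty] /=; lra.
move: J0 key.
case: (\int[mu]_(t in `[u, 1%R[) ((1 - a) * (1 - t) `^ (- a))%:E)%E => [j| |];
  [|by move=> _ _; exact: leey|by []].
move=> _ key; rewrite lee_fin.
apply/ler_addgt0Pr => e e0.
pose D := e `^ ((1 - a)^-1).
have D0 : 0 < D by apply: powR_gt0.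
have hd : forall d, 0 < d -> d < 1 - u -> d <= D ->
    (1 - u) `^ (1 - a) <= j + e.
  move=> d d0 du dD.
  have := key (1 - d); rewrite (_ : 1 - (1 - d) = d); last ring.
  rewrite lee_fin => h.
  have {h}h : (1 - u) `^ (1 - a) - d `^ (1 - a) <= j by apply: h; lra.
  have : d `^ (1 - a) <= e.
    apply: (@le_trans _ _ (D `^ (1 - a))).
      by apply: ge0_ler_powR; rewrite ?nnegrE; lra.
    by rewrite /D -powRrM mulVf ?powRr1 //; [exact: ltW|lra].
  lra.
have [Du|Du] := ltP D (1 - u).
  by apply: (hd D).
apply: (hd ((1 - u) / 2)); lra.
Qed.

Lemma young1 (x l : R) : 0 <= x -> 0 < l < 1 ->
  x `^ l <= l * x + (1 - l).
Proof.
move=> x0 /andP[l0 l1].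
have := @conjugate_powR R (x `^ l) 1 (l^-1) ((1 - l)^-1) (powR_ge0 _ _) ler01.
rewrite invr_gt0 l0 invr_gt0 subr_gt0 l1 !invrK => /(_ isT isT).
rewrite addrC subrK => /(_ erefl).
by rewrite mulr1 -powRrM mulfV ?gt_eqF// powRr1// powR1 mul1r mulrC.
Qed.


Lemma key_real (a q r : R) : 0 < a < 1 -> (1 - 3 * a) / 2 <= q ->
  0 < r < 1 ->
  (r `^ q - 1) * ((2 * r / (1 + r)) `^ a / a)
    <= (1 - 2 * r / (1 + r)) / (1 - a).
Proof.
move=> /andP[a0 a1] hq /andP[r0 r1].
have r1p : 0 < 1 + r by lra.
have rhs0 : 0 <= (1 - 2 * r / (1 + r)) / (1 - a).
  apply: divr_ge0; last lra.
  rewrite subr_ge0 ler_pdivrMr //; lra.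
have [hrq|hrq] := leP (r `^ q) 1.
  apply: le_trans rhs0; apply: mulr_le0_ge0; first lra.
  by apply: divr_ge0; [exact: powR_ge0|exact: ltW].
set c := (3 * a - 1) / 2.
have hrc : r `^ q <= r `^ (- c).
  by apply: ger_powR; [rewrite r0 ltW|rewrite /c; lra].
have c0 : 0 < c.
  rewrite ltNge; apply/negP => c0.
  have : r `^ (- c) <= r `^ 0 by apply: ger_powR; [rewrite r0 ltW|lra].
  rewrite powRr0; lra.
have a3 : 1 < 3 * a by move: c0; rewrite /c; lra.
set Q := r `^ a; set P := r `^ ((1 - a) / 2).
have QP : r `^ (- c) * Q = P.
  rewrite /Q /P -powRD; last by apply/implyP => _; rewrite gt_eqF.
  by congr (_ `^ _); rewrite /c; field.
have Q0 : 0 < Q by apply: powR_gt0.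
have Qr : r <= Q by apply: ger1_powR; [rewrite r0 ltW|lra].
have Q1 : Q <= 1.
  by rewrite /Q -(powRr0 r); apply: ger_powR; [rewrite r0 ltW|exact: ltW].
set l := (1 - a) / (2 * a).
have l0 : 0 < l by rewrite /l; apply: divr_gt0; lra.
have l1 : l < 1 by rewrite /l ltr_pdivrMr; lra.
have hP : P <= l * Q + (1 - l).
  have -> : P = Q `^ l.
    by rewrite /P /Q -powRrM; congr (_ `^ _); rewrite /l; field; lra.
  by apply: young1; [exact: ltW|rewrite l0 l1].
have hu : (2 * r / (1 + r)) `^ a <= 2 / (1 + r) * Q.
  rewrite (_ : 2 * r / (1 + r) = 2 / (1 + r) * r); last by rewrite mulrAC.
  rewrite powRM; last 2 first.
  - by apply: divr_ge0; lra.
  - exact: ltW.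
  rewrite ler_wpM2r //; first exact: ltW.
  apply: ler1_powR; last lra.
  by rewrite ler_pdivlMr //; lra.
have hrc1 : 0 <= r `^ (- c) - 1 by lra.
apply: (@le_trans _ _ ((r `^ (- c) - 1) * (2 / (1 + r) * Q / a))).
  apply: ler_pM; [lra| |lra|].
  - by apply: divr_ge0; [exact: powR_ge0|exact: ltW].
  - by rewrite ler_pM2r // invr_gt0.
rewrite (_ : (r `^ (- c) - 1) * (2 / (1 + r) * Q / a) =
   2 * (P - Q) / (a * (1 + r))); last first.
  rewrite -QP; field; lra.
rewrite (_ : 1 - 2 * r / (1 + r) = (1 - r) / (1 + r)); last by field; lra.
rewrite ler_pdivrMr; last by apply: mulr_gt0.
rewrite (_ : (1 - r) / (1 + r) / (1 - a) * (a * (1 + r)) = a * (1 - r) / (1 - a));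
  last by field; lra.
rewrite ler_pdivlMr; last lra.
have hl : 2 * (1 - a) * (1 - l) <= a.
  rewrite /l; rewrite -subr_ge0.
  have -> : a - 2 * (1 - a) * (1 - (1 - a) / (2 * a)) = (2 * a - 1) ^+ 2 / a.
    by field; lra.
  by apply: divr_ge0; [exact: sqr_ge0|lra].
nra.
Qed.


Definition g (a t : R) := t `^ (a - 1) * (1 - t) `^ (- a).

Lemma mg (a : R) (D : set R) : measurable_fun D (fun t => (g a t)%:E).
Proof.
apply/measurable_EFinP; apply: measurable_funM; first exact: mpow.
apply: (measurableT_comp (measurable_powR _)) => //; exact: measurable_funB.
Qed.

Lemma g0 (a t : R) : (0 <= (g a t)%:E)%E.
Proof. by rewrite lee_fin mulr_ge0 ?powR_ge0. Qed.

Lemma main_ineq (a q r : R) : 0 < a < 1 -> (1 - 3 * a) / 2 <= q -> 0 < r < 1 ->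
  ((r `^ q)%:E * \int[mu]_(t in `]0%R, (2 * r / (1 + r))%R[) (g a t)%:E
    <= \int[mu]_(t in `]0%R, 1%R[) (g a t)%:E)%E.
Proof.
move=> a01 hq r01; have /andP[a0 a1] := a01; have /andP[r0 r1] := r01.
set u := 2 * r / (1 + r).
have u0 : 0 < u by rewrite /u; apply: divr_gt0; lra.
have u1 : u < 1 by rewrite /u ltr_pdivrMr; lra.
set A := (1 - u) `^ (- a) / a * u `^ a.
set B := (1 - u) `^ (1 - a) / (1 - a).
have A0 : 0 <= A by rewrite /A !mulr_ge0 ?powR_ge0 // invr_ge0 ltW.
have B0 : 0 <= B by rewrite /B divr_ge0 ?powR_ge0 //; lra.
have hIu : (\int[mu]_(t in `]0%R, u[) (g a t)%:E <= A%:E)%E.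
  apply: (@le_trans _ _ (\int[mu]_(t in `]0%R, u[)
      (((1 - u) `^ (- a) / a)%:E * (a * t `^ (a - 1))%:E))%E).
    apply: ge0_le_integral => //.
    - move=> t _; exact: g0.
    - exact: mg.
    - apply/measurable_EFinP; apply: measurable_funM => //.
      apply: measurable_funM => //; exact: mpow.
    - move=> t; rewrite /= in_itv /= => /andP[t0 tu].
      rewrite -EFinM lee_fin /g.
      rewrite (_ : (1 - u) `^ (- a) / a * (a * t `^ (a - 1)) =
        t `^ (a - 1) * (1 - u) `^ (- a)); last by field; lra.
      rewrite ler_wpM2l ?powR_ge0 // !powRN lef_pV2 ?posrE ?powR_gt0 //; try lra.
      by apply: ge0_ler_powR; rewrite ?nnegrE; lra.
  rewrite ge0_integralZl_EFin; [ | exact: measurable_itv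
    | by move=> t _; rewrite lee_fin mulr_ge0 ?powR_ge0 // ltW
    | apply/measurable_EFinP; apply: measurable_funM => //; exact: mpow
    | by rewrite mulr_ge0 ?powR_ge0 // invr_ge0 ltW].
  rewrite /A (EFinM ((1 - u) `^ (- a) / a) (u `^ a)); apply: lee_pmul => //; first by rewrite lee_fin mulr_ge0 ?powR_ge0 // invr_ge0 ltW.
    by apply: integral_ge0 => t _; rewrite lee_fin mulr_ge0 ?powR_ge0 // ltW.
  exact: pow_upper.
have hJ : (B%:E <= \int[mu]_(t in `[u, 1%R[) (g a t)%:E)%E.
  apply: (@le_trans _ _ (\int[mu]_(t in `[u, 1%R[)
      ((1 - a)^-1%:E * ((1 - a) * (1 - t) `^ (- a))%:E))%E); last first.
    apply: ge0_le_integral => //.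
    - move=> t _; rewrite -EFinM lee_fin mulr_ge0 ?invr_ge0 ?mulr_ge0 ?powR_ge0 //; lra.
    - apply/measurable_EFinP; apply: measurable_funM => //; exact: monem.
    - exact: mg.
    - move=> t; rewrite /= in_itv /= => /andP[ut t1].
      rewrite -EFinM lee_fin /g mulrA mulVf ?mul1r; last lra.
      rewrite ler_peMl ?powR_ge0 //.
      rewrite -[X in X <= _](powRr0 t); apply: ger_powR; [apply/andP; split; lra|lra].
  rewrite ge0_integralZl_EFin; [ | exact: measurable_itv
    | by move=> t _; rewrite lee_fin mulr_ge0 ?powR_ge0 //; lra
    | apply/measurable_EFinP; exact: monem
    | by rewrite invr_ge0; lra].
  rewrite /B mulrC EFinM; apply: lee_pmul => //.
  - by rewrite lee_fin invr_ge0; lra.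
  - by rewrite lee_fin powR_ge0.
  - exact: onem_lower.
have split : (\int[mu]_(t in `]0%R, 1%R[) (g a t)%:E =
    \int[mu]_(t in `]0%R, u[) (g a t)%:E + \int[mu]_(t in `[u, 1%R[) (g a t)%:E)%E.
  have -> : `]0%R, 1%R[%classic = `]0%R, u[%classic `|` `[u, 1%R[%classic.
    apply/seteqP; split => t /=; rewrite !in_itv /=.
      move=> /andP[t0 t1]; have [tu|ut] := ltP t u.
        by left; apply/andP; split.
      by right; apply/andP; split.
    by move=> [/andP[t0 tu]|/andP[ut t1]]; apply/andP; split; lra.
  apply: ge0_integral_setU.
  - exact: measurable_itv.
  - exact: measurable_itv.
  - exact: mg.
  - by move=> t _; exact: g0.
  - apply/disj_setPS => t [] /=; rewrite !in_itv /= => /andP[_ tu] /andP[ut _]; lra.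
rewrite split.
have Iu0 : (0 <= \int[mu]_(t in `]0%R, u[) (g a t)%:E)%E.
  by apply: integral_ge0 => t _; exact: g0.
move: Iu0 hIu; case: (\int[mu]_(t in `]0%R, u[) (g a t)%:E)%E => [X| |];
  [ | by move=> _; rewrite leye_eq | by rewrite leeNy_eq ].
rewrite !lee_fin => X0 XA.
apply: (@le_trans _ _ (X%:E + B%:E)%E); last exact: leeD.
rewrite -EFinM -EFinD lee_fin.
have [hr|hr] := leP (r `^ q) 1.
  by apply: (@le_trans _ _ X); [rewrite ler_piMl // powR_ge0|lra].
have k := key_real a01 hq r01.
rewrite -/u in k.
have hk : (r `^ q - 1) * A <= B.
  rewrite /A /B.
  have e1 : (1 - u) `^ (1 - a) = (1 - u) * (1 - u) `^ (- a).
    rewrite powRD; last by apply/implyP => _; rewrite gt_eqF //; lra.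
    by rewrite powRr1 //; lra.
  rewrite e1.
  have p0 : 0 < (1 - u) `^ (- a) by apply: powR_gt0; lra.
  rewrite (_ : (r `^ q - 1) * ((1 - u) `^ (- a) / a * u `^ a) =
      ((r `^ q - 1) * (u `^ a / a)) * (1 - u) `^ (- a)); last ring.
  rewrite (_ : (1 - u) * (1 - u) `^ (- a) / (1 - a) =
      ((1 - u) / (1 - a)) * (1 - u) `^ (- a)); last ring.
  by rewrite ler_pM2r.
have : (r `^ q - 1) * X <= (r `^ q - 1) * A by rewrite ler_wpM2l //; lra.
lra.
Qed.

Lemma IkernE (p alpha x : R) :
  Ikern p alpha x = (\int[mu]_(t in `]0%R, x[) (g ((alpha + 2) / p) t)%:E)%E.
Proof. by apply: eq_integral => t _; rewrite /kern /g powRN. Qed.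

End helpers.

Theorem mainTheorem5 (R : realType) (alpha p : R) (halpha : 0 <= alpha)
  (hp : (9 + 3 * alpha + Num.sqrt (9 * alpha ^+ 2 + 30 * alpha + 33)) / 4 <= p) :
  alpha + 2 < p /\
  (forall r : R, 0 < r -> r <= 1 -> (Fpa p alpha r <= 0)%E).
Proof.
have D0 : 0 <= 9 * alpha ^+ 2 + 30 * alpha + 33.
  have := sqr_ge0 alpha; lra.
move: hp; set s := Num.sqrt _ => hp.
have s0 : 0 <= s := sqrtr_ge0 _.
have ss : s ^+ 2 = 9 * alpha ^+ 2 + 30 * alpha + 33 := sqr_sqrtr D0.
rewrite !expr2 in ss.
have s35 : 3 * alpha + 5 <= s by nra.
have hp2 : alpha + 2 < p by lra.
have p0 : 0 < p by lra.
have h2 : 0 <= 2 * (p * p) - (9 + 3 * alpha) * p + 3 * (2 + alpha).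
  have h4 : s <= 4 * p - 9 - 3 * alpha by lra.
  nra.
split => // r r0 r1.
have a01 : 0 < (alpha + 2) / p < 1.
  apply/andP; split; first by apply: divr_gt0; lra.
  by rewrite ltr_pdivrMr //; lra.
have hq : (1 - 3 * ((alpha + 2) / p)) / 2 <= p - 4 - 3 * alpha / 2.
  rewrite (_ : (1 - 3 * ((alpha + 2) / p)) / 2 = (p - 3 * (alpha + 2)) / (2 * p));
    last by field; lra.
  rewrite ler_pdivrMr; last lra.
  nra.
rewrite /Fpa sube_le0 !IkernE.
have [->|rlt1] := eqVneq r 1.
  rewrite (_ : 2 * 1 / (1 + 1) = 1 :> R); last by field.
  by rewrite powR1 mul1e.
apply: main_ineq => //.
by apply/andP; split => //; rewrite lt_neqAle rlt1 r1.
Qed.
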